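(* Consider an open quantum system on a finite-dimensional Hilbert space $\mathcal H$ with Hamiltonian $H$ and coupling operators $L_1,\dots,L_K$. Let $V$ be a Lyapunov operator (commuting with $H$) which is a projection, $V^2=V$. If $V$ satisfies Condition DS but does not satisfy Condition ES, then at least one of the coupling operators $L_k$ cannot be written as $L_k=U_kV$ with $U_k$ unitary. In particular, in the single-channel case ($K=1$), the coupling operator $L$ cannot be written as $L=UV$ with $U$ unitary.
   Context: For an observable $X$ commuting with $H$ the generator is $\mathcal G(X)=\sum_{k=1}^K\big(L_k^\dagger XL_k-\tfrac12L_k^\dagger L_kX-\tfrac12XL_k^\dagger L_k\big)$ (the system density evolves by $\dot\rho=-i[H,\rho]+\sum_k(L_k\rho L_k^\dagger-\tfrac12L_k^\dagger L_k\rho-\tfrac12\rho L_k^\dagger L_k)$). A Lyapunov operator is a self-adjoint $V\ge0$ with smallest eigenvalue $0$ and $\mathcal G(V)\le0$. Dissipation functional: $\mathfrak D(X)=\mathcal G(X^\dagger X)-\mathcal G(X^\dagger)X-X^\dagger\mathcal G(X)$. Condition ES: $\mathcal G(V)\le-cV$ for some $c>0$. Condition DS: $\mathcal G(V)\le0$ and $cV\le\mathfrak D(V)$ for some $c>0$. *)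

(* Defs.v *)
(* operators on the finite-dimensional Hilbert space C^n are
   square matrices 'M[C]_n over C : numClosedFieldType (e.g. the complex
   numbers). *)
From HB Require Import structures.
From mathcomp Require Import all_boot all_order all_algebra.
From mathcomp Require Export spectral.
Set Implicit Arguments.
Unset Strict Implicit.
Unset Printing Implicit Defensive.
Import Order.TTheory GRing.Theory Num.Theory.
Local Open Scope ring_scope.
Local Open Scope sesquilinear_scope.

Definition adj (C : numClosedFieldType) (n : nat) (A : 'M[C]_n) : 'M[C]_n :=
  A ^t*.

Definition selfadj (C : numClosedFieldType) (n : nat) (A : 'M[C]_n) : Prop :=
  adj A = A.

(* Positive semidefinite operator A >= 0: self-adjoint with nonnegative
   quadratic form (in a numClosedFieldType, 0 <= z means z is real and >= 0). *)
Definition psd (C : numClosedFieldType) (n : nat) (A : 'M[C]_n) : Prop :=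
  selfadj A /\ forall u : 'rV[C]_n, 0 <= (u *m A *m u ^t*) 0 0.

Definition ople (C : numClosedFieldType) (n : nat) (X Y : 'M[C]_n) : Prop :=
  psd (Y - X).

(* Generator G(X) = sum_k (L_k^† X L_k - 1/2 L_k^† L_k X - 1/2 X L_k^† L_k)
   (the Heisenberg-picture Lindblad generator for X commuting with H). *)
Definition gen (C : numClosedFieldType) (n K : nat) (L : 'I_K -> 'M[C]_n)
    (X : 'M[C]_n) : 'M[C]_n :=
  \sum_(k < K) (adj (L k) *m X *m L k
                - 2^-1 *: (adj (L k) *m L k *m X)
                - 2^-1 *: (X *m adj (L k) *m L k)).

Definition dissip (C : numClosedFieldType) (n K : nat) (L : 'I_K -> 'M[C]_n)
    (X : 'M[C]_n) : 'M[C]_n :=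
  gen L (adj X *m X) - gen L (adj X) *m X - adj X *m gen L X.

(* Lyapunov operator: self-adjoint V >= 0 whose smallest eigenvalue is 0
   (for V >= 0: 0 is an eigenvalue of V), and G(V) <= 0. *)
Definition lyapunov (C : numClosedFieldType) (n K : nat) (L : 'I_K -> 'M[C]_n)
    (V : 'M[C]_n) : Prop :=
  selfadj V /\ psd V /\ eigenvalue V 0 /\ ople (gen L V) 0.

Definition condES (C : numClosedFieldType) (n K : nat) (L : 'I_K -> 'M[C]_n)
    (V : 'M[C]_n) : Prop :=
  exists c : C, 0 < c /\ ople (gen L V) (- (c *: V)).

Definition condDS (C : numClosedFieldType) (n K : nat) (L : 'I_K -> 'M[C]_n)
    (V : 'M[C]_n) : Prop :=
  ople (gen L V) 0 /\ exists c : C, 0 < c /\ ople (c *: V) (dissip L V).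

(* Main.v *)
Require Import Defs.
From mathcomp Require Import all_boot all_order all_algebra.
From mathcomp Require Import spectral.
From Stdlib Require Import Classical.
Import Order.TTheory GRing.Theory Num.Theory.
Local Open Scope ring_scope.
Local Open Scope sesquilinear_scope.

Lemma term_eq (C : numClosedFieldType) (n : nat) (U V : 'M[C]_n) :
  U \is unitarymx -> adj V = V -> V *m V = V ->
  adj (U *m V) *m V *m (U *m V) - 2^-1 *: (adj (U *m V) *m (U *m V) *m V)
   - 2^-1 *: (V *m adj (U *m V) *m (U *m V))
  = V *m (V^t* *m U^t* *m V *m U *m V) - V.
Proof.
move=> Uu aV VV.
have UtU : U^t* *m U = 1%:M.
  by have /unitarymxP := (etrans (trmxC_unitary U) Uu); rewrite trmxCK.
have aUV : adj (U *m V) = V *m U^t*.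
  by rewrite /adj trmx_mul map_mxM -[V^t*]/(adj V) aV.
have LL : adj (U *m V) *m (U *m V) = V.
  by rewrite aUV mulmxA -(mulmxA V) UtU mulmx1 VV.
have aV' : V^t* = V := aV.
rewrite !aUV aV' !mulmxA -!(mulmxA _ (U^t*) U) UtU !mulmx1 !VV.
rewrite -addrA -opprD -scalerDl.
have -> : (2^-1 + 2^-1 : C) = 1.
  by rewrite -mulr2n -[_ *+ 2]mulr_natr mulVf // pnatr_eq0.
by rewrite scale1r.
Qed.

Theorem corollary24 (C : numClosedFieldType) (n K : nat)
    (H : 'M[C]_n) (L : 'I_K -> 'M[C]_n) (V : 'M[C]_n) :
  selfadj H ->
  H *m V = V *m H ->
  lyapunov L V ->
  V *m V = V ->
  condDS L V ->
  ~ condES L V ->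
  exists k : 'I_K, ~ (exists U : 'M[C]_n, U \is unitarymx /\ L k = U *m V).
Proof.
move=> _ _ [aV _] VV [_ [c [c0 Hc]]] nES.
apply: NNPP => Hn.
have HU : forall k, exists U : 'M[C]_n, U \is unitarymx /\ L k = U *m V.
  move=> k; apply: NNPP => h; apply: Hn; by exists k.
have T : forall k : 'I_K, exists X : 'M[C]_n,
    adj (L k) *m V *m L k - 2^-1 *: (adj (L k) *m L k *m V)
    - 2^-1 *: (V *m adj (L k) *m L k) = V *m X *m V - V.
  move=> k; case: (HU k) => U [Uu ->].
  exists (V^t* *m U^t* *m V *m U); rewrite term_eq //.
  by rewrite !mulmxA.
have GV : gen L V *m V = gen L V.
  rewrite /gen mulmx_suml; apply: eq_bigr => k _.
  by case: (T k) => X ->; rewrite mulmxBl VV -!mulmxA VV.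
have VG : V *m gen L V = gen L V.
  rewrite /gen mulmx_sumr; apply: eq_bigr => k _.
  by case: (T k) => X ->; rewrite mulmxBr VV !mulmxA VV.
have D : dissip L V = - gen L V.
  rewrite /dissip aV VV GV VG subrr sub0r.
  by [].
apply: nES; exists c; split => //.
move: Hc; rewrite /ople D.
by rewrite addrC.
Qed.
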